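(* Consider the linear model $Y=A\alpha+B\beta+\varepsilon$ with $\mathbb{E}(\varepsilon)=0$, $\mathrm{Var}(\varepsilon)=\sigma^2I$, and let $K$ be a matrix with as many rows as $\alpha$ has entries. Then the information matrix $C[K'\alpha]$ for $K'\alpha$ satisfies $$C[K'\alpha]\le (K'K)^+K'\,C[\alpha]\,K(K'K)^+$$ in the Loewner order, with equality if and only if $C[\alpha]$ commutes with $\mathrm{pr}_{(K)}$.
   Context: $X^+$ denotes the Moore–Penrose inverse; $\mathrm{pr}_{(X)}=X(X'X)^+X'$ is the orthogonal projection onto the column space of $X$, and $\mathrm{pr}^\perp_{(X)}=I-\mathrm{pr}_{(X)}$. For symmetric $M,N$, $M\le N$ means $N-M$ is nonnegative definite. In a model $\mathbb{E}(Y)=X_1\theta_1+X_2\theta_2$, the information matrix for $\theta_1$ is $X_1'\mathrm{pr}^\perp_{(X_2)}X_1$; thus $C[\alpha]=A'\mathrm{pr}^\perp_{(B)}A$, and $C[K'\alpha]$ is the information matrix for $\theta_1=K'\alpha$ in the reparametrization $\mathbb{E}(Y)=AK(K'K)^+\,(K'\alpha)+AM\,(M\alpha)+B\beta$ with $M=I-K(K'K)^+K'$, i.e. $C[K'\alpha]=X_1'\mathrm{pr}^\perp_{(X_2)}X_1$ with $X_1=AK(K'K)^+$ and $X_2=(AM\mid B)$. *)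

(* Defs.v *)
From HB Require Import structures.
From mathcomp Require Import all_boot all_order all_algebra.
From Stdlib Require Import ClassicalEpsilon.
Set Implicit Arguments. Unset Strict Implicit. Unset Printing Implicit Defensive.
Import Order.TTheory GRing.Theory Num.Theory.
Local Open Scope ring_scope.

Section Defs.
Variable R : realFieldType.

Definition penrose m n (A : 'M[R]_(m, n)) (X : 'M[R]_(n, m)) : Prop :=
  [/\ A *m X *m A = A, X *m A *m X = X,
      (A *m X)^T = A *m X & (X *m A)^T = X *m A].

(* Moore-Penrose inverse X^+ (the unique matrix satisfying the Penrose
   conditions; chosen by Hilbert's epsilon). *)
Definition mpinv m n (A : 'M[R]_(m, n)) : 'M[R]_(n, m) :=
  epsilon (inhabits 0) (fun X => penrose A X).

Definition pr m n (X : 'M[R]_(m, n)) : 'M[R]_m :=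
  X *m mpinv (X^T *m X) *m X^T.
Definition prC m n (X : 'M[R]_(m, n)) : 'M[R]_m := 1%:M - pr X.

(* Information matrix for theta_1 in E(Y) = X1 theta1 + X2 theta2. *)
Definition info m n1 n2 (X1 : 'M[R]_(m, n1)) (X2 : 'M[R]_(m, n2)) : 'M[R]_n1 :=
  X1^T *m prC X2 *m X1.

Definition C_alpha n p q (A : 'M[R]_(n, p)) (B : 'M[R]_(n, q)) : 'M[R]_p :=
  info A B.

(* C[K'alpha], via the reparametrization
   E(Y) = A K (K'K)^+ (K'alpha) + A M (M alpha) + B beta,
   M = I - K (K'K)^+ K'. *)
Definition C_Kalpha n p q s (A : 'M[R]_(n, p)) (B : 'M[R]_(n, q))
    (K : 'M[R]_(p, s)) : 'M[R]_s :=
  let M := 1%:M - K *m mpinv (K^T *m K) *m K^T in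
  info (A *m K *m mpinv (K^T *m K)) (row_mx (A *m M) B).

Definition nnd n (M : 'M[R]_n) : Prop :=
  forall x : 'cV[R]_n, 0 <= (x^T *m M *m x) 0 0.
Definition loewner_le n (M N : 'M[R]_n) : Prop := nnd (N - M).

End Defs.

(* Main.v *)
Require Import Defs.
From HB Require Import structures.
From mathcomp Require Import all_boot all_order all_algebra.
From Stdlib Require Import ClassicalEpsilon.
Import Order.TTheory GRing.Theory Num.Theory.
Local Open Scope ring_scope.
Section L.
Set Implicit Arguments. Unset Strict Implicit.
Variable R : realFieldType.

Lemma mul_self_ge0 (x : R) : 0 <= x * x.
Proof. by rewrite -expr2 sqr_ge0. Qed.

Lemma sq0 a b (Y : 'M[R]_(a, b)) : Y^T *m Y = 0 -> Y = 0.
Proof.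
move=> H; apply/matrixP => i j.
have := congr1 (fun M : 'M_b => M j j) H; rewrite !mxE => Hs.
have := @psumr_eq0P R _ xpredT (fun k => Y k j * Y k j).
move=> /(_ (fun k _ => mul_self_ge0 _)).
have -> : \sum_(k | xpredT k) Y k j * Y k j = \sum_k Y^T j k * Y k j.
  by apply: eq_bigr => k _; rewrite mxE.
move=> /(_ Hs i isT) /eqP; rewrite mulf_eq0 orbb => /eqP ->; rewrite ?mxE.
done.
Qed.

Lemma sq_ge0 a (y : 'cV[R]_a) : 0 <= (y^T *m y) 0 0.
Proof. rewrite mxE; apply: sumr_ge0 => k _; rewrite mxE; exact: mul_self_ge0. Qed.

Lemma trmx_free a b (F : 'M[R]_(a, b)) : row_free F -> forall c (u : 'M_(c, a)), u *m F *m F^T = 0 -> u = 0.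
Proof.
move=> fF c u H.
have : (u *m F)^T^T *m (u *m F)^T = 0 by rewrite trmxK trmx_mul mulmxA H mul0mx.
move/sq0/eqP; rewrite trmx_eq0 => /eqP H2.
by apply: (row_free_inj fF); rewrite H2 mul0mx.
Qed.

Lemma mp_fact m n r (F : 'M[R]_(m, r)) (G : 'M[R]_(r, n)) :
  G *m G^T \in unitmx -> F^T *m F \in unitmx -> exists X, penrose (F *m G) X.
Proof.
move=> uG uF.
set IG := invmx (G *m G^T); set IF := invmx (F^T *m F).
have sIG : IG^T = IG by rewrite /IG trmx_inv trmx_mul trmxK.
have sIF : IF^T = IF by rewrite /IF trmx_inv trmx_mul trmxK.
have GV : G *m G^T *m IG = 1%:M by exact: mulmxV.
have VG : IG *m (G *m G^T) = 1%:M by exact: mulVmx.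
have FV : F^T *m F *m IF = 1%:M by exact: mulmxV.
have VF : IF *m (F^T *m F) = 1%:M by exact: mulVmx.
exists (G^T *m IG *m IF *m F^T).
have AX : F *m G *m (G^T *m IG *m IF *m F^T) = F *m IF *m F^T.
  by rewrite !mulmxA -(mulmxA F G) -(mulmxA F) GV mulmx1.
have XA : G^T *m IG *m IF *m F^T *m (F *m G) = G^T *m IG *m G.
  by rewrite !mulmxA -(mulmxA _ F^T) -(mulmxA _ IF) VF mulmx1.
split.
- by rewrite AX !mulmxA -(mulmxA _ F^T) -(mulmxA _ IF) VF mulmx1.
- by rewrite XA !mulmxA -(mulmxA _ G) -(mulmxA G^T IG) VG mulmx1.
- by rewrite AX !trmx_mul trmxK sIF mulmxA.
- by rewrite XA !trmx_mul trmxK sIG mulmxA.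
Qed.

Lemma mp_exists m n (A : 'M[R]_(m, n)) : exists X, penrose A X.
Proof.
set F := col_base A; set G := row_base A.
have fG : row_free G by exact: row_base_free.
have fFt : row_free F^T.
  by have := col_base_full A; rewrite /row_full /row_free mxrank_tr.
have uG : G *m G^T \in unitmx.
  rewrite -row_free_unit; apply/inj_row_free => v Hv.
  by apply: (trmx_free fG); rewrite -mulmxA.
have uF : F^T *m F \in unitmx.
  rewrite -row_free_unit; apply/inj_row_free => v Hv.
  by apply: (trmx_free fFt); rewrite trmxK -mulmxA.
by have := mp_fact uG uF; rewrite mulmx_base.
Qed.

Lemma mpinvP m n (A : 'M[R]_(m, n)) : penrose A (mpinv A).
Proof.
rewrite /mpinv; apply: epsilon_spec; exact: mp_exists.
Qed.

Lemma mp_unique m n (A : 'M[R]_(m, n)) X Y : penrose A X -> penrose A Y -> X = Y.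
Proof.
move=> [X1 X2 X3 X4] [Y1 Y2 Y3 Y4].
have eX : X *m (A *m X)^T *m (A *m Y)^T = X.
  rewrite -mulmxA -trmx_mul mulmxA Y1 X3.
  by rewrite mulmxA X2.
have eX' : X *m (A *m X)^T *m (A *m Y)^T = X *m A *m Y.
  by rewrite X3 Y3 !mulmxA X2.
have eY : (X *m A)^T *m (Y *m A)^T *m Y = Y.
  rewrite -trmx_mul -(mulmxA Y) (mulmxA A) X1 Y4.
  by rewrite Y2.
have eY' : (X *m A)^T *m (Y *m A)^T *m Y = X *m A *m Y.
  by rewrite X4 Y4 -!mulmxA (mulmxA Y A Y) Y2 mulmxA.
by rewrite -eX eX' -eY' eY.
Qed.

Lemma mp_sym k (S : 'M[R]_k) : S^T = S -> (mpinv S)^T = mpinv S.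
Proof.
move=> sS; have := mpinvP S; set X := mpinv S => -[P1 P2 P3 P4].
apply: (@mp_unique _ _ S); last by split.
have e : S *m X^T = X *m S by rewrite -P4 trmx_mul sS.
have e' : X^T *m S = S *m X by rewrite -P3 trmx_mul sS.
split.
- by have := congr1 trmx P1; rewrite !trmx_mul sS mulmxA.
- by have := congr1 trmx P2; rewrite !trmx_mul sS mulmxA.
- by rewrite e P4.
- by rewrite e' P3.
Qed.

Lemma XW m k (X : 'M[R]_(m, k)) : X *m (mpinv (X^T *m X) *m (X^T *m X)) = X.
Proof.
set T := mpinv (X^T *m X).
have sS : (X^T *m X)^T = X^T *m X by rewrite trmx_mul trmxK.
have [P1 P2 P3 P4] := mpinvP (X^T *m X); rewrite -/T in P1 P2 P3 P4.
have SW : X^T *m X *m (T *m (X^T *m X)) = X^T *m X by rewrite mulmxA.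
have WS : T *m (X^T *m X) *m (X^T *m X) = X^T *m X.
  by have := congr1 trmx SW; rewrite trmx_mul P4 sS.
have DX : (X *m (T *m (X^T *m X)) - X)^T *m X = 0.
  by rewrite linearB /= trmx_mul P4 mulmxBl -mulmxA WS subrr.
apply/eqP; rewrite -subr_eq0; apply/eqP; apply: sq0.
by rewrite mulmxBr (mulmxA _ X) DX mul0mx subrr.
Qed.

Lemma mp_sym_gram m k (X : 'M[R]_(m, k)) : (mpinv (X^T *m X))^T = mpinv (X^T *m X).
Proof. by apply: mp_sym; rewrite trmx_mul trmxK. Qed.

Lemma prX m k (X : 'M[R]_(m, k)) : pr X *m X = X.
Proof. by rewrite /pr -!mulmxA XW. Qed.

Lemma pr_sym m k (X : 'M[R]_(m, k)) : (pr X)^T = pr X.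
Proof. by rewrite /pr !trmx_mul trmxK mp_sym_gram mulmxA. Qed.

Lemma pr_idem m k (X : 'M[R]_(m, k)) : pr X *m pr X = pr X.
Proof. by rewrite {2}/pr !mulmxA prX. Qed.

End L.
Theorem lemma2 (R : realFieldType) (n p q s : nat)
    (A : 'M[R]_(n, p)) (B : 'M[R]_(n, q)) (K : 'M[R]_(p, s)) :
  let KtKp := mpinv (K^T *m K) in
  let rhs := KtKp *m K^T *m C_alpha A B *m K *m KtKp in
  loewner_le (C_Kalpha A B K) rhs /\
  (C_Kalpha A B K = rhs <-> C_alpha A B *m pr K = pr K *m C_alpha A B).
Proof.
move=> KtKp rhs.
set T := KtKp.
have sT : T^T = T by exact: mp_sym_gram.
set Q := pr K.
set M : 'M_p := 1%:M - Q.
set Z := row_mx (A *m M) B.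
set V := A *m K *m T.
set P := prC B.
set D := pr Z - pr B.
set C := C_alpha A B.
have eCK : C_Kalpha A B K = V^T *m prC Z *m V by [].
have erhs : rhs = V^T *m P *m V.
  by rewrite /rhs /V -/T !trmx_mul sT /C /C_alpha /info !mulmxA.
have sQ : Q^T = Q by exact: pr_sym.
have sM : M^T = M by rewrite /M linearB /= trmx1 sQ.
have sP : P^T = P by rewrite /P /prC linearB /= trmx1 pr_sym.
have sC : C^T = C by rewrite /C /C_alpha /info !trmx_mul trmxK -/P sP mulmxA.
have [hZAM hZB] : pr Z *m (A *m M) = A *m M /\ pr Z *m B = B.
  by apply/eq_row_mx; rewrite -mul_mx_row prX.
have hZpB : pr Z *m pr B = pr B.
  by rewrite {1}/pr !mulmxA hZB.
have hBpZ : pr B *m pr Z = pr B.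
  by have := congr1 trmx hZpB; rewrite trmx_mul !pr_sym.
have sD : D^T = D by rewrite /D linearB /= !pr_sym.
have Dsq : D *m D = D.
  rewrite /D mulmxBl !mulmxBr pr_idem hZpB hBpZ pr_idem.
  by rewrite subrr subr0.
have PB : P *m B = 0 by rewrite /P /prC mulmxBl mul1mx prX subrr.
have DP : D = pr Z *m P.
  by rewrite /P /prC mulmxBr mulmx1 hZpB.
have DAM : D *m (A *m M) = P *m (A *m M).
  by rewrite /D /P /prC !mulmxBl hZAM mul1mx.
have ediff : rhs - C_Kalpha A B K = V^T *m D *m V.
  rewrite eCK erhs -mulmxBl -mulmxBr; congr (_ *m _ *m _).
  by rewrite /P /D /prC opprB addrC addrA subrK.
have eDV : V^T *m D *m V = (D *m V)^T *m (D *m V).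
  by rewrite [(D *m V)^T]trmx_mul sD mulmxA -(mulmxA _ D D) Dsq.
split.
  rewrite /loewner_le ediff eDV => x.
  have -> : x^T *m ((D *m V)^T *m (D *m V)) *m x = (D *m V *m x)^T *m (D *m V *m x).
    by rewrite [(D *m V *m x)^T]trmx_mul !mulmxA.
  exact: sq_ge0.
have step1 : C_Kalpha A B K = rhs <-> D *m V = 0.
  split.
    move=> H; apply: sq0; rewrite -eDV -ediff H subrr //.
  move=> H; apply/eqP; rewrite eq_sym -subr_eq0 ediff -mulmxA H mulmx0 //.
have step2 : D *m V = 0 <-> M *m (C *m (K *m T)) = 0.
  have eMC : M *m (C *m (K *m T)) = (A *m M)^T *m (P *m V).
    by rewrite trmx_mul sM /C /C_alpha /info -/P /V !mulmxA.
  rewrite eMC; split.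
    move=> H; rewrite -sP mulmxA -trmx_mul -DAM [(D *m _)^T]trmx_mul sD -mulmxA H mulmx0 //.
  move=> H.
  have -> : D *m V = Z *m mpinv (Z^T *m Z) *m (Z^T *m (P *m V)) by rewrite DP /pr !mulmxA.
  have -> : Z^T *m (P *m V) = col_mx ((A *m M)^T *m (P *m V)) (B^T *m (P *m V)).
    by rewrite /Z tr_row_mx mul_col_mx.
  rewrite H mulmxA -{1}sP -trmx_mul PB trmx0 mul0mx col_mx0 mulmx0 //.
rewrite step1 step2.
have QK : Q *m K = K by exact: prX.
have QG : Q *m (K *m T) = K *m T by rewrite mulmxA QK.
have eQ : K *m T *m K^T = Q by [].
split.
  move=> H.
  have H2 : M *m (C *m Q) = 0.
    rewrite -eQ -!mulmxA; move: (congr1 (mulmxr K^T) H) => /=.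
    by rewrite mul0mx -!mulmxA.
  have H3 : C *m Q = Q *m C *m Q.
    by apply/eqP; rewrite -subr_eq0 -{1}(mul1mx (C *m Q)) -mulmxA -mulmxBl H2.
  have H4 : Q *m C = Q *m C *m Q.
    by have := congr1 trmx H3; rewrite [(C *m Q)^T]trmx_mul [(Q *m C *m Q)^T]trmx_mul [(Q *m C)^T]trmx_mul sC sQ mulmxA.
  by rewrite H4 H3.
move=> H.
by rewrite -QG (mulmxA C Q) H -(mulmxA Q C) (mulmxA M Q) /M mulmxBl mul1mx pr_idem subrr mul0mx.
Qed.
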